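(* Under the assumptions of Theorem 2, on every sample path, for every $i\in[n]$ and all phases $j'\ge j\ge\tau_{\text{arm}}$, $$\mu_{B_{j'}^{(i)}}\ \ge\ \mu_{\min S_j^{(i)}}-K\sup_{j''\in\{j,\dots,j'\}}\delta_{j'',1}.$$
   Context: Arms are labeled so $\mu_1\ge\dots\ge\mu_K$, hence $\min W$ is a best arm in $W\subset[K]$. Algorithm (each honest $i$): $A_0=0$, $A_j=\lceil j^\beta\rceil$; phase $j$ = times $A_{j-1}+1..A_j$; active set $S_j^{(i)}$ = size-$S$ sticky set $\hat S^{(i)}$ plus two non-sticky arms; UCB with parameter $\alpha$ over $S_j^{(i)}$; $B_j^{(i)}$ = active arm most played during phase $j$; after receiving recommendation $R_j^{(i)}$, if $R_j^{(i)}\notin S_j^{(i)}$ the new set is $S_{j+1}^{(i)}=\hat S^{(i)}\cup\{U_{j+1}^{(i)},R_j^{(i)}\}$ where $U_{j+1}^{(i)}$ is the more-played (in phase $j$) of the two current non-sticky arms, else $S_{j+1}^{(i)}=S_j^{(i)}$ (in particular $B_j^{(i)}\in S_{j+1}^{(i)}$). Assumptions of Theorem 2: $G_{\text{hon}}$ connected; $[0,1]$ rewards; $\mu_1>\mu_2$; some honest agent has arm 1 sticky; proposed blocking rule with $\theta_j=(j/3)^{\rho_1}$, $\kappa_j=j^{\rho_2}/(K^2S)$, $\beta>1,\eta>1,0<\rho_1\le1/\eta,\alpha>\frac32+\frac1{2\beta}+\frac1{2\rho_1^2},\frac1{2\alpha-3}<\rho_2<\rho_1(\beta-1)$. Definitions: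 $D_j=\big(\frac{A_j-A_{j-1}}{S+2}-1\big)\vee1$, $\delta_{j,1}=\sqrt{4\alpha\log A_j/D_j}$; $\psi=\sqrt{(\rho_2+\beta(2\alpha-1))/(2\alpha\beta)}$; $\delta_{j,2}=\big(\sqrt{\alpha\log(A_{j-1}\vee1)}(\frac{1-\psi}{\sqrt{\kappa_j}}-\frac2{\sqrt{D_j}})\big)\vee0$; $G_\delta(W)=\{w\in W:\mu_w\ge\mu_{\min W}-\delta\}$; $\Xi_j^{(i)}=\{B_j^{(i)}\notin G_{\delta_{j,1}}(S_j^{(i)})\}\cup\{\min_{w\in G_{\delta_{j,2}}(S_j^{(i)})}T_w^{(i)}(A_j)\le\kappa_j\}$ where $T_w^{(i)}(t)$ counts pulls of $w$ by $i$ up to time $t$; $\tau_{\text{arm}}=\inf\{j:\Xi_{j'}^{(i)}\text{ fails }\forall i\in[n],j'\ge j\}$. *)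

(* Defs.v *)
From HB Require Import structures.
From mathcomp Require Import all_boot all_order all_algebra.
From mathcomp Require Import all_classical all_reals exp.
Set Implicit Arguments. Unset Strict Implicit. Unset Printing Implicit Defensive.
Import Order.TTheory GRing.Theory Num.Theory.
Local Open Scope ring_scope.

(* Arms are 'I_K, i.e. 0-indexed: the paper's arm k is our arm k-1.
   mu : 'I_K -> R with mu nonincreasing in the index. *)

(* Phase endpoints A_j = ceil (j^beta), A_0 = 0 (powR 0 beta = 0 for beta <> 0). *)
Definition Aph (R : realType) (beta : R) (j : nat) : nat :=
  `|Num.ceil ((j%:R : R) `^ beta)|%N.

Definition Dph (R : realType) (beta : R) (S j : nat) : R :=
  Num.max (((Aph beta j)%:R - (Aph beta j.-1)%:R) / (S.+2)%:R - 1) 1.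

Definition delta1 (R : realType) (alpha beta : R) (S j : nat) : R :=
  Num.sqrt (4 * alpha * ln ((Aph beta j)%:R) / Dph beta S j).

Definition psi (R : realType) (alpha beta rho2 : R) : R :=
  Num.sqrt ((rho2 + beta * (2 * alpha - 1)) / (2 * alpha * beta)).

Definition kappa (R : realType) (rho2 : R) (K S j : nat) : R :=
  (j%:R : R) `^ rho2 / ((K ^ 2)%:R * S%:R).

Definition delta2 (R : realType) (alpha beta rho2 : R) (K S j : nat) : R :=
  Num.max (Num.sqrt (alpha * ln ((maxn (Aph beta j.-1) 1)%:R)) *
           ((1 - psi alpha beta rho2) / Num.sqrt (kappa rho2 K S j)
            - 2 / Num.sqrt (Dph beta S j))) 0.

(* m is the minimum (= best, since mu is nonincreasing) arm of W *)
Definition is_min_arm (K : nat) (W : {set 'I_K}) (m : 'I_K) : bool :=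
  (m \in W) && [forall k in W, (m <= k)%N].

Definition Gset (R : realType) (K : nat) (mu : 'I_K -> R) (delta : R)
    (W : {set 'I_K}) : {set 'I_K} :=
  [set w in W | [forall m, is_min_arm W m ==> (mu m - delta <= mu w)]].

(* number of pulls of arm w by an agent (pull sequence p, times 1,2,...) at
   times s with a < s <= b *)
Definition npulls (K : nat) (p : nat -> 'I_K) (w : 'I_K) (a b : nat) : nat :=
  \sum_(a.+1 <= s < b.+1) (p s == w).

Definition Tcount (K : nat) (p : nat -> 'I_K) (w : 'I_K) (t : nat) : nat :=
  npulls p w 0 t.

(* The event Xi_j^{(i)} for one agent, given its active set S_j, its most
   played arm B_j and its pull sequence p. *)
Definition Xi (R : realType) (K S : nat) (mu : 'I_K -> R) (alpha beta rho2 : R)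
    (Sj : {set 'I_K}) (Bj : 'I_K) (p : nat -> 'I_K) (j : nat) : Prop :=
  (Bj \notin Gset mu (delta1 alpha beta S j) Sj) \/
  (exists2 w, w \in Gset mu (delta2 alpha beta rho2 K S j) Sj &
      (Tcount p w (Aph beta j))%:R <= kappa rho2 K S j).

(* tau_arm = inf { j >= 1 : Xi_{j'}^{(i)} fails for all i and all j' >= j },
   as an option (None = +infinity, i.e. empty set). *)
Definition tau_arm (n : nat) (XiP : 'I_n -> nat -> Prop) : option nat :=
  match pselect (exists j, (fun j => `[< (1 <= j)%N /\
            forall (i : 'I_n) j', (j <= j')%N -> ~ XiP i j' >]) j) with
  | left H => Some (ex_minn H)
  | right _ => None
  end.

(* Sj = hatS :|: [set N1; N2] with non-sticky arms N1, N2; Rj = recommendation;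
   Sj' = S_{j+1}, with new non-sticky arms N1', N2'. *)
Definition phase_update (K : nat) (p : nat -> 'I_K) (a b : nat)
    (hatS : {set 'I_K}) (N1 N2 Bj Rj N1' N2' : 'I_K) : Prop :=
  if Rj \in hatS :|: [set N1; N2] then N1' = N1 /\ N2' = N2
  else
    exists2 U, (U == N1) || (U == N2) &
      [/\ (npulls p N1 a b <= npulls p U a b)%N,
          (npulls p N2 a b <= npulls p U a b)%N,
          (* ties broken consistently with B_j (so that B_j \in S_{j+1}) *)
          ((Bj == N1) || (Bj == N2) -> U = Bj),
          N1' = U & N2' = Rj].

(* Main.v *)
Require Import Defs.
From HB Require Import structures.
From mathcomp Require Import all_boot all_order all_algebra.
From mathcomp Require Import all_classical all_reals exp.
From mathcomp Require Import lra.
Import Order.TTheory GRing.Theory Num.Theory.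
Local Open Scope ring_scope.

Lemma bigmax_ge (R : realType) (f : nat -> R) (j j' t : nat) :
  (j <= t <= j')%N -> f t <= \big[Num.max/0]_(j <= s < j'.+1) f s.
Proof.
move=> ht; have : t \in index_iota j j'.+1 by rewrite mem_index_iota ltnS.
elim: (index_iota j j'.+1) => [|a r IH] //; rewrite inE big_cons => /orP[/eqP->|/IH h].
  by rewrite le_max lexx.
by rewrite le_max h orbT.
Qed.

Lemma bigmax_ge0 (R : realType) (f : nat -> R) (j j' : nat) :
  0 <= \big[Num.max/0]_(j <= s < j'.+1) f s.
Proof.
elim: (index_iota j j'.+1) => [|a r IH]; first by rewrite big_nil.
by rewrite big_cons le_max IH orbT.
Qed.

Lemma chain (R : realType) (K : nat) (mu : 'I_K -> R) (v : nat -> 'I_K) (D : R) :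
  0 <= D -> forall N (P : {set 'I_K}), (#|P| <= N.+1)%N ->
  forall j j', (j <= j')%N -> (forall t, (j <= t <= j')%N -> v t \in P) ->
  (forall t, (j <= t < j')%N -> mu (v t) - D <= mu (v t.+1)) ->
  mu (v j) - N%:R * D <= mu (v j').
Proof.
move=> hD; elim=> [|N IH] P hP j j' hjj' hin hstep.
  have h1 := hin j; have h2 := hin j'.
  have e : v j = v j'.
    apply/eqP; apply: contraT => hne.
    have : (2 <= #|P|)%N.
      apply: (@leq_trans #|[set v j; v j']|); first by rewrite cards2 hne.
      apply: subset_leq_card.
      apply/fintype.subsetP => x; rewrite !inE => /orP[] /eqP ->.
      - by apply: h1; rewrite leqnn hjj'.
      - by apply: h2; rewrite leqnn hjj'.
    by move=> h; move: (leq_trans h hP).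
  by rewrite e mul0r subr0.
set x := mu (v j).
case: (lerP x (mu (v j'))) => hx.
  apply: le_trans hx; rewrite lerBlDr lerDl; exact: mulr_ge0.
have exP : exists s, (j <= s <= j')%N && (x <= mu (v s)).
  by exists j; rewrite leqnn hjj' lexx.
have ubP : forall s, (j <= s <= j')%N && (x <= mu (v s)) -> (s <= j')%N.
  by move=> s /andP[/andP[_ ->]].
case: (ex_maxnP exP ubP) => t /andP[/andP[hjt htj'] hxt] hmax.
have htlt : (t < j')%N.
  rewrite ltn_neqAle htj' andbT; apply/eqP => e.
  by move: hxt; rewrite e leNgt hx.
set P' := [set k in P | mu k < x].
have hP' : (#|P'| <= N.+1)%N.
  have : P' \proper P.
    rewrite finset.properEneq; apply/andP; split.
      apply/negP=> /eqP e.
      have : v j \in P' by rewrite e; apply: hin; rewrite leqnn hjj'.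
      by rewrite inE ltxx andbF.
    by apply/fintype.subsetP=> k; rewrite inE => /andP[].
  move=> /proper_card h; rewrite -ltnS; exact: leq_trans h hP.
have := IH P' hP' t.+1 j' htlt.
have step := hstep t; rewrite hjt htlt in step; have {}step := step erefl.
move=> H; have {}H := H _ _.
have H2 : mu (v t.+1) - N%:R * D <= mu (v j').
  apply: H => s /andP[hs1 hs2].
    rewrite inE hin ?hs2 ?(leq_trans hjt (ltnW hs1)) //=.
    rewrite ltNge; apply/negP => hxs.
    have := hmax s; rewrite hxs hs2 (leq_trans hjt (ltnW hs1)) /= => /(_ isT).
    by rewrite leqNgt hs1.
  apply: hstep; rewrite hs2 andbT; exact: leq_trans hjt (ltnW hs1).
apply: le_trans H2; rewrite -natr1 mulrDl mul1r; lra.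
Qed.

Theorem mainTheorem9
  (R : realType) (n K S : nat)
  (* means, labeled so that mu_1 >= ... >= mu_K (0-indexed here) *)
  (mu : 'I_K -> R)
  (* algorithm / blocking-rule parameters *)
  (alpha beta eta rho1 rho2 : R)
  (* a sample path of the honest agents: sticky sets, non-sticky arms of the
     active set in each phase, recommendations, most played arms, pulls *)
  (hatS : 'I_n -> {set 'I_K})
  (N1 N2 : 'I_n -> nat -> 'I_K)
  (Rec : 'I_n -> nat -> 'I_K)
  (B : 'I_n -> nat -> 'I_K)
  (pull : 'I_n -> nat -> 'I_K) :
  let Sact := fun i j => hatS i :|: [set N1 i j; N2 i j] in
  let A := Aph beta in
  (* assumptions of Theorem 2 *)
  (forall k k' : 'I_K, (k <= k')%N -> mu k' <= mu k) ->
  (forall k, 0 <= mu k <= 1) ->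
  (forall k1 k2 : 'I_K, val k1 = 0%N -> val k2 = 1%N -> mu k2 < mu k1) ->
  (exists i : 'I_n, exists2 k : 'I_K, val k = 0%N & k \in hatS i) ->
  1 < beta -> 1 < eta -> 0 < rho1 -> rho1 <= 1 / eta ->
  3 / 2 + 1 / (2 * beta) + 1 / (2 * rho1 ^+ 2) < alpha ->
  1 / (2 * alpha - 3) < rho2 -> rho2 < rho1 * (beta - 1) ->
  (* structure of the algorithm *)
  (forall i, #|hatS i| = S) ->
  (forall i j, N1 i j != N2 i j) ->
  (forall i j, N1 i j \notin hatS i) ->
  (forall i j, N2 i j \notin hatS i) ->
  (* UCB plays only active arms during each phase *)
  (forall i j t, (1 <= j)%N -> (A j.-1 < t <= A j)%N -> pull i t \in Sact i j) ->
  (* B_j = active arm most played during phase j *)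
  (forall i j, (1 <= j)%N -> B i j \in Sact i j) ->
  (forall i j k, (1 <= j)%N -> k \in Sact i j ->
     (npulls (pull i) k (A j.-1) (A j) <= npulls (pull i) (B i j) (A j.-1) (A j))%N) ->
  (* active-set update after the recommendation *)
  (forall i j, (1 <= j)%N ->
     phase_update (pull i) (A j.-1) (A j) (hatS i) (N1 i j) (N2 i j) (B i j) (Rec i j)
       (N1 i j.+1) (N2 i j.+1)) ->
  forall tau, tau_arm (fun i j =>
      Xi S mu alpha beta rho2 (Sact i j) (B i j) (pull i) j) = Some tau ->
  forall (i : 'I_n) (j j' : nat) (m : 'I_K), (tau <= j)%N -> (j <= j')%N ->
  is_min_arm (Sact i j) m ->
  mu m - K%:R * \big[Num.max/0]_(j <= j'' < j'.+1) delta1 alpha beta S j''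
    <= mu (B i j').

Proof.
move=> Sact A hmono _ _ _ _ _ _ _ _ _ _ hcard hN12 hN1 hN2 _ hBin _ hupd
  tau htau i j j' m htj hjj' hm.
have [htau1 hfail] : (1 <= tau)%N /\ forall (i : 'I_n) j', (tau <= j')%N ->
    ~ Xi S mu alpha beta rho2 (Sact i j') (B i j') (pull i) j'.
  move: htau; rewrite /tau_arm; case: pselect => // H [<-].
  by case: ex_minnP => k /asboolP.
pose mina t := [arg min_(k < N1 i t in Sact i t) val k].
have hmina : forall t, is_min_arm (Sact i t) (mina t).
  move=> t; rewrite /mina; case: arg_minnP => [|k hk hmin].
    by rewrite /Sact !inE eqxx orbT.
  rewrite /is_min_arm hk /=; apply/forallP=> k'; apply/implyP => /hmin //.
have uniq_min : forall W (m1 m2 : 'I_K), is_min_arm W m1 -> is_min_arm W m2 -> m1 = m2.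
  move=> W m1 m2 /andP[h1 /forall_inP f1] /andP[h2 /forall_inP f2].
  by apply/val_inj/eqP; rewrite eqn_leq f1 // f2.
have monomin : forall W (k mm : 'I_K), is_min_arm W mm -> k \in W -> mu k <= mu mm.
  by move=> W k mm /andP[_ /forall_inP f] hk; apply: hmono; apply: f.
have step1 : forall t, (tau <= t)%N -> mu (mina t) - delta1 alpha beta S t <= mu (B i t).
  move=> t ht.
  have hG : B i t \in Gset mu (delta1 alpha beta S t) (Sact i t).
    apply: contraT => hn; case: (hfail i t ht); by left.
  rewrite inE in hG; move/andP: hG => [_ /forallP /(_ (mina t)) /implyP].
  by apply; apply: hmina.
have step2 : forall t, (tau <= t)%N -> mu (B i t) <= mu (mina t.+1).
  move=> t ht; apply: (monomin (Sact i t.+1)); first exact: hmina.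
  have ht1 : (1 <= t)%N by apply: leq_trans htau1 ht.
  have hb := hBin i t ht1.
  have := hupd i t ht1; rewrite /phase_update; case: ifP => hR.
    by move=> [e1 e2]; rewrite /Sact e1 e2.
  move=> [U hU [_ _ hUB e1 e2]].
  move: hb; rewrite /Sact e1 e2 !inE => /orP[->//|hb].
  by rewrite (hUB hb) eqxx orbT.
set D := \big[Num.max/0]_(j <= j'' < j'.+1) delta1 alpha beta S j''.
have hD0 : 0 <= D by apply: bigmax_ge0.
have hK : (0 < K)%N by case: m {hm} => k /= hk; apply: leq_ltn_trans hk.
have hch := @chain R K mu mina D hD0 K.-1 [set: 'I_K].
rewrite cardsT card_ord prednK // in hch.
have {}hch := hch (leqnn K) j j' hjj' (fun t _ => finset.in_setT _).
have {}hch : mu (mina j) - (K.-1)%:R * D <= mu (mina j').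
  apply: hch => t /andP[hjt htj'].
  have ht : (tau <= t)%N by apply: leq_trans htj hjt.
  have := step1 t ht; have := step2 t ht.
  have : delta1 alpha beta S t <= D by apply: bigmax_ge; rewrite hjt ltnW.
  lra.
have e : mina j = m by apply: (uniq_min (Sact i j)).
have hj'' : delta1 alpha beta S j' <= D by apply: bigmax_ge; rewrite hjj' leqnn.
have := step1 j' (leq_trans htj hjj').
rewrite -e; rewrite -(prednK hK) -natr1 mulrDl mul1r.
lra.
Qed.
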